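(* Let $\mathcal{T}\mathcal{E}$ be the tangent equation of $u_{tx}=2u_yu_{xx}+4u_xu_{xy}-u_{xxxy}$, i.e. the system consisting of this equation together with $q_{tx}=2u_yq_{xx}+2u_{xx}q_y+4u_xq_{xy}+4u_{xy}q_x-q_{xxxy}$, where $q$ and its derivatives are odd (anticommuting) variables. Then the system $$w_x=2u_xq_x,\qquad w_y=q_t+q_{xxy}-2u_xq_y-2u_yq_x,$$ with $w$ odd, is compatible on $\mathcal{T}\mathcal{E}$ and thus defines a covering $\tau\colon W\to\mathcal{T}\mathcal{E}$; moreover, for every $\mu\in\mathbb{R}$, setting $\gamma=1-\mu t$, the function $$S^u=(2\gamma u_x-\mu y)q-\gamma q_{xx}+\gamma w$$ is a symmetry shadow in the composition $\mathbf{t}\circ\tau\colon W\to\mathcal{E}$, i.e. it satisfies $D_xD_tS^u-2u_{xx}D_yS^u-2u_yD_x^2S^u-4u_{xy}D_xS^u-4u_xD_xD_yS^u+D_x^3D_yS^u=0$ with total derivatives lifted to $W$.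
   Context: $\mathbf{t}\colon\mathcal{T}\mathcal{E}\to\mathcal{E}$ is the tangent covering $(u_\sigma,q_\sigma)\mapsto u_\sigma$. A covering over an equation is given by additional (nonlocal) variables with derivatives prescribed by a system whose compatibility conditions hold by virtue of the equation; total derivatives are extended accordingly (e.g. $D_x(w)=2u_xq_x$). A shadow in a covering is a solution of the lifted linearized equation. *)

(* Defs.v *)
From HB Require Import structures.
From mathcomp Require Import all_boot all_order all_algebra.
From mathcomp Require Import reals.
Set Implicit Arguments. Unset Strict Implicit. Unset Printing Implicit Defensive.
Import GRing.Theory.
Local Open Scope ring_scope.

(* A   : the (commutative) algebra of even functions, over the reals R.
   M   : an A-module carrying the odd functions; all expressions in the
         statement are linear in the odd variables q, w, so the odd part
         enters only as a module over the even part.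
   Dt Dx Dy : even total derivatives acting on A;  Et Ex Ey : the same
   total derivatives acting on the odd part M. *)

Definition derivation (R : realType) (A : comAlgType R) (D : A -> A) : Prop :=
  (forall a b : A, D (a + b) = D a + D b) /\
  (forall (c : R) (a : A), D (c *: a) = c *: D a) /\
  (forall a b : A, D (a * b) = D a * b + a * D b).

Definition mod_derivation (R : realType) (A : comAlgType R) (M : lmodType A)
    (D : A -> A) (E : M -> M) : Prop :=
  (forall m n : M, E (m + n) = E m + E n) /\
  (forall (a : A) (m : M), E (a *: m) = D a *: m + a *: E m).

Definition commuting (T : Type) (F G : T -> T) : Prop := forall x, F (G x) = G (F x).

Definition total_derivations (R : realType) (A : comAlgType R) (M : lmodType A)
    (Dt Dx Dy : A -> A) (Et Ex Ey : M -> M) : Prop :=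
  [/\ derivation Dt, derivation Dx & derivation Dy] /\
  [/\ mod_derivation Dt Et, mod_derivation Dx Ex & mod_derivation Dy Ey] /\
  [/\ commuting Dt Dx, commuting Dt Dy & commuting Dx Dy] /\
  [/\ commuting Et Ex, commuting Et Ey & commuting Ex Ey].

Definition equationE (R : realType) (A : comAlgType R) (Dt Dx Dy : A -> A) (u : A) : Prop :=
  Dx (Dt u) = 2 * Dy u * Dx (Dx u) + 4 * Dx u * Dx (Dy u) - Dx (Dx (Dx (Dy u))).

Definition equationTE (R : realType) (A : comAlgType R) (M : lmodType A)
    (Dt Dx Dy : A -> A) (Et Ex Ey : M -> M) (u : A) (q : M) : Prop :=
  Ex (Et q) = (2 * Dy u) *: Ex (Ex q) + (2 * Dx (Dx u)) *: Ey q
              + (4 * Dx u) *: Ex (Ey q) + (4 * Dx (Dy u)) *: Ex q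
              - Ex (Ex (Ex (Ey q))).

Definition cov_x (R : realType) (A : comAlgType R) (M : lmodType A)
    (Dx : A -> A) (Ex : M -> M) (u : A) (q : M) : M :=
  (2 * Dx u) *: Ex q.

Definition cov_y (R : realType) (A : comAlgType R) (M : lmodType A)
    (Dx Dy : A -> A) (Et Ex Ey : M -> M) (u : A) (q : M) : M :=
  Et q + Ex (Ex (Ey q)) - (2 * Dx u) *: Ey q - (2 * Dy u) *: Ex q.

Definition lin_E (R : realType) (A : comAlgType R) (M : lmodType A)
    (Dx Dy : A -> A) (Et Ex Ey : M -> M) (u : A) (S : M) : M :=
  Ex (Et S) - (2 * Dx (Dx u)) *: Ey S - (2 * Dy u) *: Ex (Ex S)
  - (4 * Dx (Dy u)) *: Ex S - (4 * Dx u) *: Ex (Ey S) + Ex (Ex (Ex (Ey S))).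

Definition shadowSu (R : realType) (A : comAlgType R) (M : lmodType A)
    (Dx : A -> A) (Ex : M -> M) (mu : R) (t y u : A) (q w : M) : M :=
  let gamma := 1 - mu *: t in
  (2 * gamma * Dx u - mu *: y) *: q - gamma *: Ex (Ex q) + gamma *: w.

(* Main.v *)
Require Import Defs.
From HB Require Import structures.
From mathcomp Require Import all_boot all_order all_algebra.
From mathcomp Require Import reals.
From mathcomp Require Import ring.
Import GRing.Theory.
Local Open Scope ring_scope.
Set Implicit Arguments. Unset Strict Implicit.

Section S.
Variables (A : comNzRingType) (M : lmodType A).
Definition SZ := (A * M)%type.
HB.instance Definition _ := GRing.Zmodule.on SZ.
Definition szmul (x y : SZ) : SZ := (x.1 * y.1, x.1 *: y.2 + y.1 *: x.2).
Definition szone : SZ := (1, 0).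
Lemma szmulA : associative szmul.
Proof. case=> a m [b n] [c p]; rewrite /szmul /=; congr (_, _); first by rewrite mulrA.
by rewrite !scalerDr !scalerA (mulrC c b) (mulrC c a) addrA. Qed.
Lemma szmulC : commutative szmul.
Proof. case=> a m [b n]; rewrite /szmul /=; congr (_, _); [exact: mulrC|exact: addrC]. Qed.
Lemma szmul1 : left_id szone szmul.
Proof. case=> a m; rewrite /szmul /= mul1r scale1r scaler0 addr0 //. Qed.
Lemma szmulD : left_distributive szmul +%R.
Proof. case=> a m [b n] [c p]; rewrite /szmul /=; congr (_, _); first by rewrite mulrDl.
by rewrite scalerDl scalerDr; rewrite -!addrA; congr (_ + _); rewrite addrCA. Qed.
Lemma szone0 : szone != 0.
Proof. apply/negP => /eqP [] /eqP; rewrite oner_eq0. done. Qed.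
HB.instance Definition _ := GRing.Zmodule_isComNzRing.Build SZ szmulA szmulC szmul1 szmulD szone0.
Definition iM (m : M) : SZ := (0, m).
Definition iA (a : A) : SZ := (a, 0).
Lemma iM_inj : injective iM. Proof. by move=> x y []. Qed.
Lemma iMD m n : iM (m + n) = iM m + iM n. Proof. by rewrite /iM; congr (_,_); rewrite addr0. Qed.
Lemma iMN m : iM (- m) = - iM m. Proof. by rewrite /iM; congr (_,_); rewrite oppr0. Qed.
Lemma iM0 : iM 0 = 0. Proof. by []. Qed.
Lemma iMZ a m : iM (a *: m) = iA a * iM m.
Proof. rewrite /iM /iA; rewrite /GRing.mul /=. rewrite /szmul /= mulr0 scaler0 addr0. done. Qed.
Lemma iAD a b : iA (a + b) = iA a + iA b. Proof. by rewrite /iA; congr (_,_); rewrite addr0. Qed.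
Lemma iAN a : iA (- a) = - iA a. Proof. by rewrite /iA; congr (_,_); rewrite oppr0. Qed.
Lemma iAM a b : iA (a * b) = iA a * iA b.
Proof. rewrite /iA /GRing.mul /= /szmul /= !scaler0 addr0 //. Qed.
Lemma iA1 : iA 1 = 1. Proof. by []. Qed.
Lemma iA0 : iA 0 = 0. Proof. by []. Qed.
Lemma iAn n : iA n%:R = n%:R.
Proof. elim: n => [|n IH] //; by rewrite -!natr1 iAD IH. Qed.
End S.

Section DerLemmas.
Variables (R : realType) (A : comAlgType R) (M : lmodType A).
Variables (D : A -> A) (E : M -> M).
Hypothesis HD : derivation D.
Hypothesis HE : mod_derivation D E.
Lemma dD a b : D (a + b) = D a + D b. Proof. by case: HD. Qed.
Lemma dM a b : D (a * b) = D a * b + a * D b. Proof. by case: HD => _ []. Qed.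
Lemma dZ (c : R) a : D (c *: a) = c *: D a. Proof. by case: HD => _ []. Qed.
Lemma d0 : D 0 = 0. Proof. by have := dZ 0 0; rewrite !scale0r. Qed.
Lemma dN a : D (- a) = - D a. Proof. by apply/eqP; rewrite -subr_eq0 opprK -dD addNr d0. Qed.
Lemma d1 : D 1 = 0. Proof. have := dM 1 1; rewrite !mul1r mulr1 -{1}[D 1]addr0 => /addrI; by []. Qed.
Lemma dn n : D n%:R = 0. Proof. elim: n => [|n IH]; first exact: d0. by rewrite -natr1 dD IH d1 addr0. Qed.
Lemma eD m n : E (m + n) = E m + E n. Proof. by case: HE. Qed.
Lemma eZ a m : E (a *: m) = D a *: m + a *: E m. Proof. by case: HE. Qed.
Lemma e0 : E 0 = 0. Proof. by have := eZ 0 0; rewrite !scale0r scaler0 add0r. Qed.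
Lemma eN m : E (- m) = - E m. Proof. by apply/eqP; rewrite -subr_eq0 opprK -eD addNr e0. Qed.
End DerLemmas.
Theorem proposition4 :
  (* compatibility of the covering system on TE *)
  (forall (R : realType) (A : comAlgType R) (M : lmodType A)
     (Dt Dx Dy : A -> A) (Et Ex Ey : M -> M) (u : A) (q : M),
     total_derivations Dt Dx Dy Et Ex Ey ->
     equationE Dt Dx Dy u -> equationTE Dt Dx Dy Et Ex Ey u q ->
     Ey (cov_x Dx Ex u q) = Ex (cov_y Dx Dy Et Ex Ey u q)) /\
  (* S^u is a shadow in the composite covering W -> E *)
  (forall (R : realType) (A : comAlgType R) (M : lmodType A)
     (Dt Dx Dy : A -> A) (Et Ex Ey : M -> M) (t y u : A) (q w : M) (mu : R),
     total_derivations Dt Dx Dy Et Ex Ey ->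
     Dt t = 1 -> Dx t = 0 -> Dy t = 0 ->
     Dt y = 0 -> Dx y = 0 -> Dy y = 1 ->
     equationE Dt Dx Dy u -> equationTE Dt Dx Dy Et Ex Ey u q ->
     Ex w = cov_x Dx Ex u q -> Ey w = cov_y Dx Dy Et Ex Ey u q ->
     lin_E Dx Dy Et Ex Ey u (shadowSu Dx Ex mu t y u q w) = 0).

Proof.
split.
- move=> R A M Dt Dx Dy Et Ex Ey u q [[HDt HDx HDy] [[HEt HEx HEy] [[cTX cTY cXY] [mTX mTY mXY]]]] HE HTE.
  rewrite /cov_x /cov_y.
  rewrite !(eD HEx) !(eN HEx) !(eZ HEx) !(eZ HEy) !(dM HDy) !(dM HDx) !(dn HDy) !(dn HDx).
  rewrite HTE -!mXY -!cXY.
  apply: (@iM_inj _ M). rewrite !(iMD, iMN, iMZ, iAD, iAN, iAM, iAn, iA1, iA0). ring.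
- move=> R A M Dt Dx Dy Et Ex Ey t y u q w mu [[HDt HDx HDy] [[HEt HEx HEy] [[cTX cTY cXY] [mTX mTY mXY]]]].
  move=> Htt Htx Hty Hyt Hyx Hyy HE HTE Hwx Hwy.
  have Hwt : Ex (Et w) = Et (cov_x Dx Ex u q) by rewrite -mTX Hwx.
  rewrite /cov_x /cov_y in Hwx Hwy Hwt.
  rewrite /lin_E /shadowSu /=.
  have cYX : forall x, Dy (Dx x) = Dx (Dy x) by move=> x; rewrite cXY.
  have mYX : forall x, Ey (Ex x) = Ex (Ey x) by move=> x; rewrite mXY.
  have Dxc : Dx (mu *: 1) = 0 by rewrite (dZ HDx) (d1 HDx) scaler0.
  have Dyc : Dy (mu *: 1) = 0 by rewrite (dZ HDy) (d1 HDy) scaler0.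
  have Dtc : Dt (mu *: 1) = 0 by rewrite (dZ HDt) (d1 HDt) scaler0.
  have Dxg : Dx (1 - mu *: t) = 0 by rewrite (dD HDx) (dN HDx) (dZ HDx) (d1 HDx) Htx scaler0 subr0.
  have Dyg : Dy (1 - mu *: t) = 0 by rewrite (dD HDy) (dN HDy) (dZ HDy) (d1 HDy) Hty scaler0 subr0.
  have Dtg : Dt (1 - mu *: t) = - (mu *: 1) by rewrite (dD HDt) (dN HDt) (dZ HDt) (d1 HDt) Htt add0r.
  have DxY : Dx (mu *: y) = 0 by rewrite (dZ HDx) Hyx scaler0.
  have DyY : Dy (mu *: y) = mu *: 1 by rewrite (dZ HDy) Hyy.
  have DtY : Dt (mu *: y) = 0 by rewrite (dZ HDt) Hyt scaler0.
  move: Dxc Dyc Dtc Dxg Dyg Dtg DxY DyY DtY.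
  move: (mu *: 1) (1 - mu *: t) (mu *: y) => c g Y Dxc Dyc Dtc Dxg Dyg Dtg DxY DyY DtY.
  Time (do 5! (rewrite ?(eD HEx, eN HEx, eZ HEx, eD HEy, eN HEy, eZ HEy, eD HEt, eN HEt, eZ HEt); rewrite ?(dD HDx, dN HDx, dD HDy, dN HDy, dD HDt, dN HDt, d0 HDx, d0 HDy, d0 HDt); rewrite ?(dM HDx, dM HDy, dM HDt); rewrite ?(dn HDx, dn HDy, dn HDt, d1 HDx, d1 HDy, d1 HDt); rewrite ?(Dxc, Dyc, Dtc, Dxg, Dyg, Dtg, DxY, DyY, DtY, mul0r, mulr0, add0r, addr0, oppr0, scale0r, scaler0); rewrite ?(cTX, cTY, cYX); rewrite ?(mTX, mTY, mYX); rewrite ?(HE, HTE, Hwx, Hwy, Hwt))).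
  apply: (@iM_inj _ M). Time rewrite !(iMD, iMN, iMZ). Time rewrite ?(iAD, iAN, iAM, iAn, iA1, iA0). rewrite iM0. Time ring.
Qed.
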